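(* Let $X$ be an $R$-module and $Y\le X$. Then $\mathrm{rad}_M(Y)\subseteq\mathrm{rad}_M(X)$.
   Context: $R$ is a ring with identity, modules are unital left $R$-modules, $M$ is a fixed left $R$-module. For $N\le M$ and a module $X$, $N\cdot X$ is the intersection of the kernels of all homomorphisms $X\to W$ where $W$ ranges over modules with $f(N)=0$ for all $f\in\mathrm{Hom}_R(M,W)$ (for $Z\le X$, $N\cdot Z$ is formed regarding $Z$ as a module). A proper submodule $P$ of a module $X$ is $M$-prime if for all $N\le M$, $Z\le X$, $N\cdot Z\subseteq P$ implies $N\cdot X\subseteq P$ or $Z\subseteq P$. For a module $X$, the $M$-prime radical $\mathrm{rad}_M(X)$ is the intersection of all $M$-prime submodules of $X$ if $X$ has at least one, and $\mathrm{rad}_M(X)=X$ otherwise. *)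

(* Defs.v *)
(* Left modules over a ring with identity R are [lmodType R]
   (R : pzRingType, so the zero ring is not excluded). *)
From HB Require Import structures.
From mathcomp Require Import all_boot all_order all_algebra.
Set Implicit Arguments. Unset Strict Implicit. Unset Printing Implicit Defensive.
Import GRing.Theory.
Local Open Scope ring_scope.

Definition is_submod (R : pzRingType) (X : lmodType R) (S : X -> Prop) : Prop :=
  S 0 /\ (forall x y, S x -> S y -> S (x + y)) /\ (forall (r : R) x, S x -> S (r *: x)).

(* R-module homomorphism Z -> W, for Z a submodule of X (Z regarded as a module):
   a map defined on X whose restriction to Z is additive and R-linear. *)
Definition hom_on (R : pzRingType) (X W : lmodType R) (Z : X -> Prop) (f : X -> W) : Prop :=
  (forall x y, Z x -> Z y -> f (x + y) = f x + f y) /\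
  (forall (r : R) x, Z x -> f (r *: x) = r *: f x).

Definition hom (R : pzRingType) (M W : lmodType R) (f : M -> W) : Prop :=
  (forall x y, f (x + y) = f x + f y) /\ (forall (r : R) x, f (r *: x) = r *: f x).

(* N . Z : intersection of the kernels of all homs Z -> W, W ranging over
   modules with f(N) = 0 for all f in Hom_R(M, W). *)
Definition mprod (R : pzRingType) (M X : lmodType R) (N : M -> Prop) (Z : X -> Prop)
  : X -> Prop :=
  fun x => Z x /\
    forall (W : lmodType R),
      (forall f : M -> W, hom f -> forall m, N m -> f m = 0) ->
      forall g : X -> W, hom_on Z g -> g x = 0.

Definition subset_of (X : Type) (A B : X -> Prop) : Prop := forall x, A x -> B x.

Definition mprime (R : pzRingType) (M X : lmodType R) (A P : X -> Prop) : Prop :=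
  is_submod P /\ subset_of P A /\ (exists x, A x /\ ~ P x) /\
  forall (N : M -> Prop) (Z : X -> Prop),
    is_submod N -> is_submod Z -> subset_of Z A ->
    subset_of (mprod N Z) P -> subset_of (mprod N A) P \/ subset_of Z P.

Definition mrad (R : pzRingType) (M X : lmodType R) (A : X -> Prop) : X -> Prop :=
  fun x =>
    ((exists P, mprime M A P) /\ (forall P, mprime M A P -> P x)) \/
    ((~ exists P, mprime M A P) /\ A x).

(* Main.v *)
Require Import Defs.
From HB Require Import structures.
From mathcomp Require Import all_boot all_order all_algebra.
From Stdlib Require Import Classical.

Lemma mrad_sub (R : pzRingType) (M X : lmodType R) (Y : X -> Prop) :
  subset_of (mrad M Y) Y.
Proof.
move=> x [[[P HP] H]|[_ H]] //.
by have [_ [HPY _]] := HP; apply: HPY; apply: H.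
Qed.

Lemma prime_restrict (R : pzRingType) (M X : lmodType R) (Y P : X -> Prop) :
  is_submod Y -> mprime M (fun _ : X => True) P -> ~ subset_of Y P ->
  mprime M Y (fun x => P x /\ Y x).
Proof.
move=> [Y0 [YD YZ]] [[P0 [PD PZ]] [_ [_ Hpr]]] nYP.
split.
  split; first by split.
  split; first by move=> x y [? ?] [? ?]; split; auto.
  by move=> r x [? ?]; split; auto.
split; first by move=> x [].
split.
  apply: NNPP => Hn; apply: nYP => x Yx; apply: NNPP => Px.
  by apply: Hn; exists x; split => // -[].
move=> N Z HN HZ ZY HNZ.
have HNZ' : subset_of (mprod N Z) P by move=> x /HNZ [].
case: (Hpr N Z HN HZ (fun _ _ => I) HNZ') => H; [left|right].
  move=> x [Yx Hx]; split => //; apply: H; split => // W HW g [g1 g2].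
  by apply: (Hx W HW g); split; auto.
by move=> x Zx; split; auto.
Qed.

Theorem proposition2p28 (R : pzRingType) (M X : lmodType R) (Y : X -> Prop) :
  is_submod Y -> subset_of (mrad M Y) (mrad M (fun _ : X => True)).
Proof.
move=> HY x Hx.
case: (classic (exists P, mprime M (fun _ : X => True) P)) => Hex; last by right.
left; split => // P HP.
case: (classic (subset_of Y P)) => HYP; first by apply: HYP; apply: mrad_sub Hx.
have HQ := @prime_restrict _ M _ _ _ HY HP HYP.
case: Hx => [[_ H]|[Hn _]]; first by case: (H _ HQ).
by exfalso; apply: Hn; exists (fun x => P x /\ Y x).
Qed.
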